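(* Let $X$ be a Tychonoff space with $|X|>1$ and $I\in\mathbb{A}(X)$. Then: (a) $\mathrm{ecc}(I)=3$ iff $\mathcal{O}(I)$ is not a singleton; (b) $\mathrm{ecc}(I)=2$ iff $\mathcal{O}(I)$ is a singleton and $|X|>2$; (c) $\mathrm{ecc}(I)=1$ iff $\mathcal{O}(I)$ is a singleton and $|X|=2$.
   Context: $C(X)$ denotes the ring of all real-valued continuous functions on $X$; $\mathrm{Coz}(f)=\{x: f(x)\neq 0\}$; for $S\subseteq C(X)$, $\mathcal{O}(S)=\bigcup_{f\in S}\mathrm{Coz}(f)$. $\mathbb{A}(X)$ is the set of nonzero ideals $I$ of $C(X)$ for which there is a nonzero ideal $J$ with $IJ=\{0\}$. $\mathbb{AG}(X)$ has vertex set $\mathbb{A}(X)$, distinct $I,J$ adjacent iff $IJ=\{0\}$. The eccentricity $\mathrm{ecc}(I)$ is the maximum of the distances $d(I,J)$ over vertices $J$. *)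

(* Defs.v *)
From Stdlib Require Import Reals.
Open Scope R_scope.

Record topology (X : Type) := {
  is_open : (X -> Prop) -> Prop;
  open_full : is_open (fun _ => True);
  open_inter : forall U V, is_open U -> is_open V -> is_open (fun x => U x /\ V x);
  open_union : forall F : (X -> Prop) -> Prop,
      (forall U, F U -> is_open U) -> is_open (fun x => exists U, F U /\ U x)
}.
Arguments is_open {X} t U.

Definition is_closed {X} (T : topology X) (F : X -> Prop) : Prop :=
  is_open T (fun x => ~ F x).

Definition R_open (U : R -> Prop) : Prop :=
  forall x, U x -> exists eps, eps > 0 /\ forall y, Rabs (y - x) < eps -> U y.

Definition continuous_fun {X} (T : topology X) (f : X -> R) : Prop :=
  forall U, R_open U -> is_open T (fun x => U (f x)).

Definition T1 {X} (T : topology X) : Prop :=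
  forall x y : X, x <> y -> exists U, is_open T U /\ U y /\ ~ U x.

Definition completely_regular {X} (T : topology X) : Prop :=
  forall (F : X -> Prop) (x : X), is_closed T F -> ~ F x ->
    exists f, continuous_fun T f /\ f x = 0 /\ (forall y, F y -> f y = 1)
              /\ (forall y, 0 <= f y <= 1).

Definition tychonoff {X} (T : topology X) : Prop := T1 T /\ completely_regular T.

Definition ideal {X} (T : topology X) (I : (X -> R) -> Prop) : Prop :=
  (forall f, I f -> continuous_fun T f) /\
  I (fun _ => 0) /\
  (forall f g, I f -> I g -> I (fun x => f x + g x)) /\
  (forall f g, I f -> continuous_fun T g -> I (fun x => g x * f x)).

Definition nonzero_ideal {X} (T : topology X) (I : (X -> R) -> Prop) : Prop :=
  ideal T I /\ exists f, I f /\ exists x, f x <> 0.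

(** I J = {0}: the ideal generated by all products f g is zero iff every
    product f g (f in I, g in J) is the zero function. *)
Definition prod_zero {X} (I J : (X -> R) -> Prop) : Prop :=
  forall f g, I f -> J g -> forall x, f x * g x = 0.

Definition annih {X} (T : topology X) (I : (X -> R) -> Prop) : Prop :=
  nonzero_ideal T I /\ exists J, nonzero_ideal T J /\ prod_zero I J.

Definition same_ideal {X} (I J : (X -> R) -> Prop) : Prop :=
  forall f, I f <-> J f.

Definition adj {X} (T : topology X) (I J : (X -> R) -> Prop) : Prop :=
  annih T I /\ annih T J /\ ~ same_ideal I J /\ prod_zero I J.

Inductive walk {X} (T : topology X) :
    nat -> ((X -> R) -> Prop) -> ((X -> R) -> Prop) -> Prop :=
  | walk0 : forall I J, annih T I -> same_ideal I J -> walk T 0 I J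
  | walkS : forall n I K J, adj T I K -> walk T n K J -> walk T (S n) I J.

Definition dist_eq {X} (T : topology X) (I J : (X -> R) -> Prop) (n : nat) : Prop :=
  walk T n I J /\ forall m, (m < n)%nat -> ~ walk T m I J.

Definition ecc_eq {X} (T : topology X) (I : (X -> R) -> Prop) (n : nat) : Prop :=
  (forall J, annih T J -> exists m, (m <= n)%nat /\ dist_eq T I J m) /\
  (exists J, annih T J /\ dist_eq T I J n).

Definition Ocoz {X} (S : (X -> R) -> Prop) (x : X) : Prop :=
  exists f, S f /\ f x <> 0.

Definition is_singleton {X} (A : X -> Prop) : Prop :=
  exists x, forall y, A y <-> y = x.

Definition card_gt1 (X : Type) : Prop := exists x y : X, x <> y.
Definition card_gt2 (X : Type) : Prop :=
  exists x y z : X, x <> y /\ x <> z /\ y <> z.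
Definition card_eq2 (X : Type) : Prop :=
  exists x y : X, x <> y /\ forall z, z = x \/ z = y.

(* Main.v *)
Require Import Defs.
From Stdlib Require Import Reals Lra Lia Classical FunctionalExtensionality PropExtensionality.
Open Scope R_scope.

Lemma open_ext {X} (T : topology X) (U V : X -> Prop) :
  is_open T U -> (forall x, U x <-> V x) -> is_open T V.
Proof.
  intros H E. replace V with U; auto.
  apply functional_extensionality; intro x; apply propositional_extensionality; apply E.
Qed.

Lemma open_empty {X} (T : topology X) : is_open T (fun _ => False).
Proof.
  eapply open_ext. apply (open_union X T (fun _ => False)). intros U [].
  intros x; split; [intros [U [[] _]] | intros []].
Qed.

Lemma R_open_lt c : R_open (fun t => t < c).
Proof. intros x Hx. exists (c - x). split. lra. intros y Hy. apply Rabs_def2 in Hy. lra. Qed.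
Lemma R_open_gt c : R_open (fun t => t > c).
Proof. intros x Hx. exists (x - c). split. lra. intros y Hy. apply Rabs_def2 in Hy. lra. Qed.
Lemma R_open_neq0 : R_open (fun t => t <> 0).
Proof. intros x Hx. exists (Rabs x). split. apply Rabs_pos_lt; auto.
  intros y Hy Hy0. subst. rewrite Rminus_0_l, Rabs_Ropp in Hy. lra. Qed.
Lemma R_open_ball c r : R_open (fun t => Rabs (t - c) < r).
Proof. intros x Hx. exists (r - Rabs (x - c)). split. lra. intros y Hy.
  split_Rabs; lra. Qed.

Lemma cont_ext {X} (T : topology X) f g :
  continuous_fun T f -> (forall x, f x = g x) -> continuous_fun T g.
Proof. intros H E. replace g with f; auto. apply functional_extensionality; auto. Qed.

Lemma cont_const {X} (T : topology X) c : continuous_fun T (fun _ => c).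
Proof.
  intros U HU. destruct (classic (U c)).
  - eapply open_ext. apply open_full. simpl; tauto.
  - eapply open_ext. apply open_empty. simpl; tauto.
Qed.

Lemma cont_plus {X} (T : topology X) f g :
  continuous_fun T f -> continuous_fun T g -> continuous_fun T (fun x => f x + g x).
Proof.
  intros Hf Hg U HU.
  set (Fam := fun W : X -> Prop => exists x0 e, e > 0 /\
     (forall y, Rabs (y - (f x0 + g x0)) < e -> U y) /\
     W = (fun x => Rabs (f x - f x0) < e/2 /\ Rabs (g x - g x0) < e/2)).
  eapply open_ext. apply (open_union X T Fam).
  - intros W [x0 [e [He [HUe ->]]]].
    apply open_inter. apply (Hf _ (R_open_ball (f x0) (e/2))).
    apply (Hg _ (R_open_ball (g x0) (e/2))).
  - intros x; split.
    + intros [W [[x0 [e [He [HUe ->]]]] [H1 H2]]]. apply HUe. split_Rabs; lra.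
    + intros Hx. destruct (HU _ Hx) as [e [He HUe]].
      exists (fun y => Rabs (f y - f x) < e/2 /\ Rabs (g y - g x) < e/2).
      split. exists x, e. auto.
      unfold Rminus; rewrite !Rplus_opp_r, Rabs_R0; lra.
Qed.

Lemma cont_mult {X} (T : topology X) f g :
  continuous_fun T f -> continuous_fun T g -> continuous_fun T (fun x => f x * g x).
Proof.
  intros Hf Hg U HU.
  set (Fam := fun W : X -> Prop => exists x0 d, d > 0 /\
     (forall x, Rabs (f x - f x0) < d -> Rabs (g x - g x0) < d -> U (f x * g x)) /\
     W = (fun x => Rabs (f x - f x0) < d /\ Rabs (g x - g x0) < d)).
  eapply open_ext. apply (open_union X T Fam).
  - intros W [x0 [e [He [HUe ->]]]].
    apply open_inter. apply (Hf _ (R_open_ball (f x0) e)).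
    apply (Hg _ (R_open_ball (g x0) e)).
  - intros x; split.
    + intros [W [[x0 [e [He [HUe ->]]]] [H1 H2]]]. apply HUe; auto.
    + intros Hx. destruct (HU _ Hx) as [e [He HUe]].
      set (a := Rabs (f x)). set (b := Rabs (g x)).
      assert (Ha : 0 <= a) by apply Rabs_pos. assert (Hb : 0 <= b) by apply Rabs_pos.
      set (d := Rmin 1 (e / (2 * (a + b + 1)))).
      assert (Hd1 : d <= 1) by apply Rmin_l.
      assert (Hd2 : d * (2 * (a + b + 1)) <= e).
      { assert (d <= e / (2 * (a + b + 1))) by apply Rmin_r.
        apply Rmult_le_compat_r with (r := 2 * (a + b + 1)) in H; [|lra].
        replace (e / (2 * (a + b + 1)) * (2 * (a + b + 1))) with e in H; auto.
        field. lra. }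
      assert (Hd0 : d > 0).
      { unfold d. apply Rmin_pos. lra. apply Rdiv_lt_0_compat; lra. }
      exists (fun y => Rabs (f y - f x) < d /\ Rabs (g y - g x) < d).
      split.
      * exists x, d. split; [auto|split; [|reflexivity]].
        intros y Hu Hw. apply HUe.
        set (u := f y - f x) in *. set (w := g y - g x) in *.
        replace (f y * g y - f x * g x) with (u * g x + u * w + f x * w)
          by (unfold u, w; ring).
        assert (Hu0 := Rabs_pos u). assert (Hw0 := Rabs_pos w).
        eapply Rle_lt_trans. eapply Rle_trans. apply Rabs_triang.
        apply Rplus_le_compat_r. apply Rabs_triang.
        rewrite !Rabs_mult. fold a b.
        assert (Rabs u * b <= d * b) by (apply Rmult_le_compat_r; lra).
        assert (Rabs u * Rabs w <= d * 1) by (apply Rmult_le_compat; lra).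
        assert (a * Rabs w <= a * d) by (apply Rmult_le_compat_l; lra).
        nra.
      * unfold Rminus; rewrite !Rplus_opp_r, Rabs_R0; lra.
Qed.
Definition Vid {X} (T : topology X) (S : X -> Prop) (h : X -> R) : Prop :=
  continuous_fun T h /\ forall v, S v -> h v = 0.

Lemma Vid_ideal {X} (T : topology X) S : ideal T (Vid T S).
Proof.
  split; [|split; [|split]].
  - intros f [H _]; auto.
  - split. apply cont_const. auto.
  - intros f g [Hf Ef] [Hg Eg]. split. apply cont_plus; auto.
    intros v Hv. rewrite Ef, Eg; auto; lra.
  - intros f g [Hf Ef] Hg. split. apply cont_mult; auto.
    intros v Hv. rewrite Ef; auto; lra.
Qed.

Lemma bump {X} (T : topology X) (HT : tychonoff T) (G : X -> Prop) z :
  is_open T G -> G z ->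
  exists k, continuous_fun T k /\ k z = 1 /\ forall v, ~ G v -> k v = 0.
Proof.
  intros HG Gz. destruct HT as [_ CR].
  assert (Hc : is_closed T (fun v => ~ G v)).
  { unfold is_closed. eapply open_ext. apply HG. intros x; split; auto. apply NNPP. }
  destruct (CR _ z Hc (fun H => H Gz)) as [f [Hf [fz [f1 _]]]].
  exists (fun v => 1 - f v). split; [|split].
  - apply (cont_ext T (fun x => 1 + (-1) * f x)).
    apply (cont_plus T (fun _ => 1) (fun x => (-1) * f x)). apply cont_const.
    apply (cont_mult T (fun _ => -1) f). apply cont_const. apply Hf.
    intros x; simpl; ring.
  - rewrite fz; ring.
  - intros v Hv. rewrite f1; auto; ring.
Qed.

Lemma open_neq {X} (T : topology X) (HT : tychonoff T) b : is_open T (fun v => v <> b).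
Proof.
  destruct HT as [T1 _].
  eapply open_ext. apply (open_union X T (fun U => is_open T U /\ ~ U b)).
  - intros U [H _]; auto.
  - intros v; split.
    + intros [U [[_ Hb] Hv]] E. subst; auto.
    + intros Hv. destruct (T1 b v) as [U [HU [Uv Ub]]]. auto.
      exists U; auto.
Qed.

Lemma open_lt {X} (T : topology X) f c : continuous_fun T f -> is_open T (fun x => f x < c).
Proof. intros Hf. apply (Hf _ (R_open_lt c)). Qed.
Lemma open_gt {X} (T : topology X) f c : continuous_fun T f -> is_open T (fun x => f x > c).
Proof. intros Hf. apply (Hf _ (R_open_gt c)). Qed.
Lemma open_coz {X} (T : topology X) f : continuous_fun T f -> is_open T (fun x => f x <> 0).
Proof. intros Hf. apply (Hf _ R_open_neq0). Qed.

Lemma const_mult {X} (T : topology X) I f c : ideal T I -> I f -> I (fun v => c * f v).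
Proof. intros [_ [_ [_ H]]] Hf. apply (H f (fun _ => c)); auto. apply cont_const. Qed.

Lemma pz_sym {X} (I J : (X -> R) -> Prop) : prod_zero I J -> prod_zero J I.
Proof. intros H f g Hf Hg x. rewrite Rmult_comm. apply H; auto. Qed.

Lemma pz_vanish {X} (I K : (X -> R) -> Prop) v k : prod_zero I K -> Ocoz I v -> K k -> k v = 0.
Proof. intros H [f [If fv]] Kk. destruct (Rmult_integral _ _ (H f k If Kk v)); tauto. Qed.

Lemma not_ocoz {X} (I : (X -> R) -> Prop) f v : ~ Ocoz I v -> I f -> f v = 0.
Proof. intros H If. destruct (Req_dec (f v) 0); auto. exfalso; apply H; exists f; auto. Qed.

Lemma not_same_pz {X} (T : topology X) I J : nonzero_ideal T I -> prod_zero I J -> ~ same_ideal I J.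
Proof.
  intros [_ [f [If [x fx]]]] H S. apply fx. apply S in If as Jf.
  destruct (Rmult_integral _ _ (H f f If Jf x)); auto.
Qed.

Lemma annih_of {X} (T : topology X) I J :
  nonzero_ideal T I -> nonzero_ideal T J -> prod_zero I J -> annih T I.
Proof. intros; split; eauto. Qed.

Lemma adj_of {X} (T : topology X) I J : annih T I -> annih T J -> prod_zero I J -> adj T I J.
Proof. intros HI HJ H. split; [auto|split; [auto|split; [|auto]]]. apply (not_same_pz T); auto. apply (proj1 HI). Qed.

Lemma same_refl {X} (I : (X -> R) -> Prop) : same_ideal I I.
Proof. intros f; tauto. Qed.

Lemma walk0_inv {X} (T : topology X) I J : walk T 0 I J -> same_ideal I J.
Proof. intros H; inversion H; auto. Qed.

Lemma walk1_inv {X} (T : topology X) I J : walk T 1 I J -> prod_zero I J.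
Proof.
  intros H; inversion H; subst. apply walk0_inv in H2. destruct H1 as [_ [_ [_ P]]].
  intros f g Hf Hg. apply P; auto. apply H2; auto.
Qed.

Lemma walk2_inv {X} (T : topology X) I J : walk T 2 I J ->
  exists K, nonzero_ideal T K /\ prod_zero I K /\ prod_zero K J.
Proof.
  intros H; inversion H; subst. apply walk1_inv in H2. destruct H1 as [_ [[HK _] [_ P]]].
  exists K; auto.
Qed.

Lemma dist_of_walk {X} (T : topology X) n I J : walk T n I J ->
  exists m, (m <= n)%nat /\ dist_eq T I J m.
Proof.
  revert I J. induction n as [n IH] using (well_founded_induction Wf_nat.lt_wf).
  intros I J Hw.
  destruct (classic (exists m, (m < n)%nat /\ walk T m I J)) as [[m [Hm Hw']]|Hno].
  - destruct (IH m Hm I J Hw') as [m' [Hm' D]]. exists m'; split; auto; lia.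
  - exists n; split; auto. split; auto. intros m Hm Hw'. apply Hno; eauto.
Qed.

Lemma dist_unique {X} (T : topology X) I J a b : dist_eq T I J a -> dist_eq T I J b -> a = b.
Proof.
  intros [Wa Ma] [Wb Mb]. destruct (Compare_dec.lt_eq_lt_dec a b) as [[H|H]|H]; auto.
  - exfalso; apply (Mb a); auto.
  - exfalso; apply (Ma b); auto.
Qed.

Lemma ecc_unique {X} (T : topology X) I n m : ecc_eq T I n -> ecc_eq T I m -> n = m.
Proof.
  intros [A1 [J0 [HJ0 D0]]] [B1 [J1 [HJ1 D1]]].
  destruct (B1 J0 HJ0) as [m0 [Hm0 D0']]. destruct (A1 J1 HJ1) as [n0 [Hn0 D1']].
  pose proof (dist_unique T I J0 _ _ D0 D0'). pose proof (dist_unique T I J1 _ _ D1 D1'). lia.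
Qed.

Lemma walk2_of {X} (T : topology X) I J K : annih T I -> annih T J -> nonzero_ideal T K ->
  prod_zero I K -> prod_zero K J -> walk T 2 I J.
Proof.
  intros HI HJ HK P1 P2.
  assert (AK : annih T K) by (apply (annih_of T K J); auto; apply HJ).
  apply (walkS T 1 I K J). apply adj_of; auto.
  apply (walkS T 0 K J J). apply adj_of; auto. constructor; auto. apply same_refl.
Qed.

Lemma walk1_of {X} (T : topology X) I J : annih T I -> annih T J -> prod_zero I J -> walk T 1 I J.
Proof.
  intros HI HJ P. apply (walkS T 0 I J J). apply adj_of; auto. constructor; auto. apply same_refl.
Qed.

Lemma pz_Vid {X} (T : topology X) I : prod_zero I (Vid T (Ocoz I)).
Proof.
  intros f k If [_ Hk] v. destruct (Req_dec (f v) 0) as [E|E]. rewrite E; ring.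
  rewrite Hk. ring. exists f; auto.
Qed.

Lemma Vid_nonzero {X} (T : topology X) I : annih T I -> nonzero_ideal T (Vid T (Ocoz I)).
Proof.
  intros [_ [J [[[HJc _] [g [Jg [w gw]]]] P]]]. split. apply Vid_ideal.
  exists g. split; [|eauto]. split. auto. intros v Hv. eapply pz_vanish; eauto.
Qed.

Lemma diam3 {X} (T : topology X) I J : annih T I -> annih T J ->
  exists n, (n <= 3)%nat /\ walk T n I J.
Proof.
  intros HI HJ.
  destruct (classic (same_ideal I J)) as [S|S].
  { exists 0%nat; split; auto. constructor; auto. }
  destruct (classic (prod_zero I J)) as [P|P].
  { exists 1%nat; split; auto. apply walk1_of; auto. }
  destruct (classic (exists K, nonzero_ideal T K /\ prod_zero I K /\ prod_zero K J))
    as [[K [HK [P1 P2]]]|Hno].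
  { exists 2%nat; split; auto. eapply walk2_of; eauto. }
  exists 3%nat; split; auto.
  set (K1 := Vid T (Ocoz I)). set (K2 := Vid T (Ocoz J)).
  assert (N1 : nonzero_ideal T K1) by (apply Vid_nonzero; auto).
  assert (N2 : nonzero_ideal T K2) by (apply Vid_nonzero; auto).
  assert (P12 : prod_zero K1 K2).
  { intros k1 k2 [C1 H1] [C2 H2] w. apply NNPP; intros Hne. apply Hno.
    exists (Vid T (fun v => k1 v * k2 v = 0)). split; [|split].
    - split. apply Vid_ideal. exists (fun v => k1 v * k2 v). split; [|eauto].
      split. apply cont_mult; auto. auto.
    - intros f l If [_ Hl] v. destruct (Req_dec (f v) 0) as [E|E]. rewrite E; ring.
      rewrite Hl. ring. rewrite H1. ring. exists f; auto.
    - intros l g [_ Hl] Jg v. destruct (Req_dec (g v) 0) as [E|E]. rewrite E; ring.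
      rewrite Hl. ring. rewrite H2. ring. exists g; auto. }
  assert (A1 : annih T K1) by (apply (annih_of T K1 K2); auto).
  assert (A2 : annih T K2) by (apply (annih_of T K2 K1); auto; apply pz_sym; auto).
  apply (walkS T 2 I K1 J). apply adj_of; auto. apply pz_Vid.
  eapply walk2_of; eauto. apply pz_sym, pz_Vid.
Qed.

Lemma dist_le3 {X} (T : topology X) I J : annih T I -> annih T J ->
  exists m, (m <= 3)%nat /\ dist_eq T I J m.
Proof.
  intros HI HJ. destruct (diam3 T I J HI HJ) as [n [Hn W]].
  destruct (dist_of_walk T n I J W) as [m [Hm D]]. exists m; split; auto; lia.
Qed.

Lemma caseA {X} (T : topology X) (HT : tychonoff T) I (HI : annih T I) a b :
  a <> b -> Ocoz I a -> Ocoz I b -> ecc_eq T I 3.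
Proof.
  intros Hab [fa [Ifa fa0]] [fb [Ifb fb0]].
  split. { intros J HJ. apply dist_le3; auto. }
  destruct HI as [[IdI NI] AI].
  assert (Hcfa : continuous_fun T fa) by (apply IdI; auto).
  assert (Hcl : is_closed T (fun v => v = b)).
  { unfold is_closed. apply open_neq; auto. }
  destruct (proj2 HT _ a Hcl Hab) as [f [Hf [fa1 [fb1 _]]]].
  set (G := fun v => f v < 1/2 /\ fa v <> 0).
  assert (OG : is_open T G) by (apply open_inter; [apply open_lt|apply open_coz]; auto).
  destruct (bump T HT G a OG) as [k1 [Ck1 [k1a k1G]]].
  { split; auto. rewrite fa1; lra. }
  set (I1 := Vid T (fun v => ~ G v)).
  assert (N1 : nonzero_ideal T I1).
  { split. apply Vid_ideal. exists k1. split. split; auto. exists a. lra. }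
  set (J := Vid T (Ocoz I1)).
  destruct (bump T HT (fun v => f v > 1/2) b) as [kb [Ckb [kbb kbV]]].
  { apply open_gt; auto. } { rewrite fb1; auto. lra. }
  assert (Jkb : J kb).
  { split; auto. intros v [h [[_ Hh] hv]]. apply kbV.
    assert (G v). { apply NNPP. intros nG. apply hv. apply Hh; auto. }
    destruct H; lra. }
  assert (NJ : nonzero_ideal T J).
  { split. apply Vid_ideal. exists kb. split; auto. exists b. lra. }
  assert (AJ : annih T J) by (apply (annih_of T J I1); auto; apply pz_sym, pz_Vid).
  assert (AI' : annih T I) by (split; auto; split; auto).
  exists J. split; auto.
  destruct (dist_le3 T I J AI' AJ) as [m [Hm D]].
  destruct m as [|[|[|[|m]]]]; try lia; auto; exfalso; destruct D as [W _].
  - apply walk0_inv in W. apply W in Ifa as [_ Ha].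
    apply fa0. apply Ha. exists k1. split. split; auto. lra.
  - apply walk1_inv in W. apply fb0.
    destruct (Rmult_integral _ _ (W fb kb Ifb Jkb b)); auto. lra.
  - apply walk2_inv in W. destruct W as [K [[IdK [k [Kk [w kw]]]] [P1 P2]]].
    assert (Jk : J k).
    { split. apply IdK; auto. intros v [h [[_ Hh] hv]].
      assert (G v). { apply NNPP. intros nG. apply hv. apply Hh; auto. }
      apply (pz_vanish I K v k); auto. exists fa. split; auto. apply H. }
    apply kw. destruct (Rmult_integral _ _ (P2 k k Kk Jk w)); auto.
Qed.

Lemma off_single {X} (I : (X -> R) -> Prop) x f v :
  (forall y, Ocoz I y <-> y = x) -> I f -> v <> x -> f v = 0.
Proof. intros Hx If Hv. apply (not_ocoz I); auto. intros H. apply Hv, Hx; auto. Qed.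

Lemma diam2_single {X} (T : topology X) I J x : annih T I -> annih T J ->
  (forall y, Ocoz I y <-> y = x) -> exists n, (n <= 2)%nat /\ walk T n I J.
Proof.
  intros HI HJ Hx.
  destruct (classic (same_ideal I J)) as [S|S].
  { exists 0%nat; split; auto. constructor; auto. }
  destruct (classic (Ocoz J x)) as [Ox|Ox].
  - destruct HJ as [NJ [K [NK P]]] eqn:E.
    exists 2%nat; split; auto. apply (walk2_of T I J K); auto.
    + intros f k If Kk v. destruct (classic (v = x)) as [->|Hv].
      * rewrite (pz_vanish J K x k); auto. ring.
      * rewrite (off_single I x f v); auto. ring.
    + apply pz_sym; auto.
  - exists 1%nat; split; auto. apply walk1_of; auto.
    intros f g If Jg v. destruct (classic (v = x)) as [->|Hv].
    * rewrite (not_ocoz J g x); auto. ring.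
    * rewrite (off_single I x f v); auto. ring.
Qed.

Lemma dist_le2_single {X} (T : topology X) I J x : annih T I -> annih T J ->
  (forall y, Ocoz I y <-> y = x) -> exists m, (m <= 2)%nat /\ dist_eq T I J m.
Proof.
  intros HI HJ Hx. destruct (diam2_single T I J x HI HJ Hx) as [n [Hn W]].
  destruct (dist_of_walk T n I J W) as [m [Hm D]]. exists m; split; auto; lia.
Qed.

Lemma caseB {X} (T : topology X) (HT : tychonoff T) I (HI : annih T I) x y z :
  (forall w, Ocoz I w <-> w = x) -> y <> x -> z <> x -> y <> z -> ecc_eq T I 2.
Proof.
  intros Hx Hyx Hzx Hyz.
  split. { intros J HJ. apply (dist_le2_single T I J x); auto. }
  assert (Hcl : is_closed T (fun v => v = x \/ v = y)).
  { unfold is_closed. eapply open_ext. apply (open_inter X T _ _ (open_neq T HT x) (open_neq T HT y)).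
    simpl. intros v; tauto. }
  assert (Hnz : ~ (z = x \/ z = y)) by (intros [E|E]; congruence).
  destruct (proj2 HT _ z Hcl Hnz) as [f [Hf [fz [f1 _]]]].
  set (G := fun v => f v < 1/2).
  destruct (bump T HT G z) as [kz [Ckz [kzz kzG]]].
  { apply open_lt; auto. } { unfold G; lra. }
  set (I2 := Vid T (fun v => ~ G v)).
  assert (N2 : nonzero_ideal T I2).
  { split. apply Vid_ideal. exists kz. split. split; auto. exists z. lra. }
  set (J := Vid T (Ocoz I2)).
  assert (HJb : forall p, f p = 1 -> exists h, J h /\ h p = 1).
  { intros p fp. destruct (bump T HT (fun v => f v > 1/2) p) as [kb [Ckb [kbb kbV]]].
    { apply open_gt; auto. } { lra. }
    exists kb. split; auto. split; auto. intros v [h [[_ Hh] hv]]. apply kbV.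
    assert (G v). { apply NNPP. intros nG. apply hv. apply Hh; auto. }
    unfold G in H. lra. }
  destruct (HJb x (f1 x (or_introl eq_refl))) as [hx [Jhx hxx]].
  destruct (HJb y (f1 y (or_intror eq_refl))) as [hy [Jhy hyy]].
  assert (NJ : nonzero_ideal T J).
  { split. apply Vid_ideal. exists hx. split; auto. exists x. lra. }
  assert (AJ : annih T J) by (apply (annih_of T J I2); auto; apply pz_sym, pz_Vid).
  exists J. split; auto.
  destruct (dist_le2_single T I J x HI AJ Hx) as [m [Hm D]].
  destruct m as [|[|[|m]]]; try lia; auto; exfalso; destruct D as [W _].
  - apply walk0_inv in W. apply W in Jhy.
    assert (hy y = 0) by (apply (off_single I x); auto). lra.
  - apply walk1_inv in W. destruct (proj2 (Hx x) eq_refl) as [f0 [If0 f0x]].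
    destruct (Rmult_integral _ _ (W f0 hx If0 Jhx x)); auto. lra.
Qed.

Lemma caseC {X} (T : topology X) (HT : tychonoff T) I (HI : annih T I) x y :
  (forall w, Ocoz I w <-> w = x) -> y <> x -> (forall z, z = x \/ z = y) -> ecc_eq T I 1.
Proof.
  intros Hx Hyx Hall.
  destruct (proj2 (Hx x) eq_refl) as [f0 [If0 f0x]].
  assert (f0y : f0 y = 0) by (apply (off_single I x); auto).
  split.
  - intros J HJ.
    assert (W : exists n, (n <= 1)%nat /\ walk T n I J).
    { destruct (classic (Ocoz J x)) as [Ox|Ox].
      - exists 0%nat; split; auto. constructor; auto.
        destruct Ox as [g0 [Jg0 g0x]].
        destruct HJ as [[IdJ NJ] [K [[IdK [k [Kk [w kw]]]] P]]].
        assert (Hw : w = y).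
        { destruct (Hall w) as [->|]; auto. exfalso. apply kw.
          apply (pz_vanish J K x k); auto. exists g0; auto. }
        subst w.
        assert (Jy : forall g, J g -> g y = 0).
        { intros g Jg. destruct (Rmult_integral _ _ (P g k Jg Kk y)); auto. lra. }
        assert (g0y := Jy g0 Jg0).
        intros f; split; intros Hf.
        + assert (fy : f y = 0) by (apply (off_single I x); auto).
          replace f with (fun v => (f x / g0 x) * g0 v).
          apply (const_mult T); auto.
          apply functional_extensionality; intros v.
          destruct (Hall v) as [->| ->]. field; auto. rewrite fy, g0y; ring.
        + assert (fy : f y = 0) by auto.
          replace f with (fun v => (f x / f0 x) * f0 v).
          apply (const_mult T); auto. apply HI.
          apply functional_extensionality; intros v.
          destruct (Hall v) as [->| ->]. field; auto. rewrite fy, f0y; ring.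
      - exists 1%nat; split; auto. apply walk1_of; auto.
        intros f g If Jg v. destruct (classic (v = x)) as [->|Hv].
        * rewrite (not_ocoz J g x); auto. ring.
        * rewrite (off_single I x f v); auto. ring. }
    destruct W as [n [Hn W]]. destruct (dist_of_walk T n I J W) as [m [Hm D]].
    exists m; split; auto; lia.
  - destruct HI as [NI [K [NK P]]] eqn:E.
    assert (AK : annih T K) by (apply (annih_of T K I); auto; apply pz_sym; auto).
    exists K; split; auto.
    destruct (dist_of_walk T 1 I K (walk1_of T I K HI AK P)) as [m [Hm D]].
    destruct m as [|[|m]]; try lia; auto. exfalso.
    destruct D as [W _]. apply walk0_inv in W. revert W. apply (not_same_pz T); auto.
Qed.

Lemma gt2_pick {X} (x : X) : card_gt2 X -> exists y z, y <> x /\ z <> x /\ y <> z.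
Proof.
  intros [p [q [r [H1 [H2 H3]]]]].
  destruct (classic (p = x)) as [->|Hp]. exists q, r; auto.
  destruct (classic (q = x)) as [->|Hq]. exists p, r; auto.
  exists p, q; auto.
Qed.

Lemma eq2_pick {X} (x : X) : card_gt1 X -> ~ card_gt2 X ->
  exists y, y <> x /\ forall z, z = x \/ z = y.
Proof.
  intros [p [q Hpq]] N.
  assert (exists y, y <> x) as [y Hy].
  { destruct (classic (p = x)) as [->|Hp]. exists q; auto. exists p; auto. }
  exists y; split; auto. intros z.
  destruct (classic (z = x)); auto. destruct (classic (z = y)); auto.
  exfalso; apply N. exists x, y, z; auto.
Qed.

Lemma gt2_eq2 X : card_gt2 X -> card_eq2 X -> False.
Proof.
  intros [p [q [r [H1 [H2 H3]]]]] [a [b [Hab E]]].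
  destruct (E p), (E q), (E r); subst; congruence.
Qed.

Theorem mainTheorem10 (X : Type) (T : topology X) (HT : tychonoff T)
  (HX : card_gt1 X) (I : (X -> R) -> Prop) (HI : annih T I) :
  (ecc_eq T I 3 <-> ~ is_singleton (Ocoz I)) /\
  (ecc_eq T I 2 <-> is_singleton (Ocoz I) /\ card_gt2 X) /\
  (ecc_eq T I 1 <-> is_singleton (Ocoz I) /\ card_eq2 X).
Proof.
  destruct (classic (is_singleton (Ocoz I))) as [[x Hx]|Hns].
  - assert (Hs : is_singleton (Ocoz I)) by (exists x; auto).
    destruct (classic (card_gt2 X)) as [H3|H3].
    + destruct (gt2_pick x H3) as [y [z [Hy [Hz Hyz]]]].
      pose proof (caseB T HT I HI x y z Hx Hy Hz Hyz) as E2.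
      split; [|split]; split.
      * intros E3. pose proof (ecc_unique T I _ _ E3 E2). lia.
      * tauto.
      * auto.
      * auto.
      * intros E1. pose proof (ecc_unique T I _ _ E1 E2). lia.
      * intros [_ H]. exfalso; apply (gt2_eq2 X); auto.
    + destruct (eq2_pick x HX H3) as [y [Hy Hall]].
      pose proof (caseC T HT I HI x y Hx Hy Hall) as E1.
      split; [|split]; split.
      * intros E3. pose proof (ecc_unique T I _ _ E3 E1). lia.
      * tauto.
      * intros E2. pose proof (ecc_unique T I _ _ E2 E1). lia.
      * tauto.
      * intros _. split; auto. exists x, y; split; [congruence|].
        intros z; destruct (Hall z); auto.
      * auto.
  - assert (exists a b, a <> b /\ Ocoz I a /\ Ocoz I b) as [a [b [Hab [Ha Hb]]]].
    { destruct HI as [[_ [f [If [a fa]]]] _].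
      assert (Ha : Ocoz I a) by (exists f; auto).
      apply NNPP; intros N. apply Hns. exists a. intros y; split.
      - intros Hy. apply NNPP; intros Hne. apply N. exists y, a; auto.
      - intros ->; auto. }
    pose proof (caseA T HT I HI a b Hab Ha Hb) as E3.
    split; [|split]; split.
    + auto.
    + auto.
    + intros E2. pose proof (ecc_unique T I _ _ E2 E3). lia.
    + tauto.
    + intros E1. pose proof (ecc_unique T I _ _ E1 E3). lia.
    + tauto.
Qed.
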